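(* Let $U,V\in\mathbb{R}_{\max}^{m\times n}$, $b,d\in\mathbb{R}_{\max}^m$, $p\in\mathbb{R}_{\max}^n$, $q\in(\mathbb{R}\cup\{+\infty\})^n$, with $A$, $B(\lambda)$, $\Phi$, strategies and the game graph as described in the context. Then $\lambda^*\in\mathbb{R}$ is optimal (i.e. $\Phi(\lambda^* )\ge 0$ and $\Phi(\lambda)<0$ for all $\lambda<\lambda^*$) if and only if $\Phi(\lambda^* )\geq 0$ and there exist a positional strategy $\tau$ of Min and a node $j$ of Min such that, in the game graph defined by $A_\tau$ and $B(\lambda^* )$, every cycle accessible from $j$ has non-positive weight, and every cycle of zero weight accessible from $j$ contains a node of Max that does not belong to the group $[m]$.
   Context: Max-plus notation: $\mathbb{R}_{\max}=\mathbb{R}\cup\{-\infty\}$, $a\oplus b=\max(a,b)$, $a\otimes b=a+b$, extended to matrices as usual ($(A\otimes B)_{ij}=\max_k(a_{ik}+b_{kj})$). $I$ is the max-plus identity (0 on the diagonal, $-\infty$ elsewhere). The conjugate $a^-$ is $-a$ for real $a$, $+\infty$ for $a=-\infty$, $-\infty$ for $a=+\infty$; $q^-=(q_i^-)$ as a row vector. These data define Problem (P): minimize $x^-\otimes p\oplus q^-\otimes x$ over $x\in\mathbb{R}^n$ subject to $U\otimes x\oplus b\le V\otimes x\oplus d$. Set $$A=\begin{pmatrix} U & b\\ -\infty & p\\ q^- & -\infty\end{pmatrix},\qquad B(\lambda)=\begin{pmatrix} V & d\\ \lambda\otimes I & -\infty\\ -\infty & \lambda\end{pmatrix}$$ ($(m+n+1)\times(n+1)$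 matrices; the middle block row of $A$ is $(-\infty_{n\times n},\,p)$, its last row is $(q^-,-\infty)$; $\lambda\otimes I$ has $\lambda$ on the diagonal and $-\infty$ elsewhere; the last row of $B(\lambda)$ is $(-\infty,\dots,-\infty,\lambda)$). Game graph defined by matrices $A'$ and $B'$ (both $(m+n+1)\times(n+1)$): nodes of Max are the rows $1,\dots,m+n+1$, and the first $m$ rows form the group $[m]$ (corresponding to the constraint $U\otimes x\oplus b\le V\otimes x\oplus d$); nodes of Min are the columns $1,\dots,n+1$. There is an arc from Max node $i$ to Min node $l$ of weight $b'_{il}$ whenever $b'_{il}\ne-\infty$, and an arc from Min node $j$ to Max node $i$ of weight $-a'_{ij}$ whenever $a'_{ij}\neq-\infty$. The weight of a cycle is the sum of its arc weights. A positional strategy of Min is a map $\tau:\{1,\dots,n+1\}\to\{1,\dots,m+n+1\}$ with $a_{\tau(j)j}\ne-\infty$; $A_\tau$ keeps the entries $a_{\tau(j)j}$ and replaces all other entries by $-\infty$. For $M\times N$ matrices $A',B'$, $A'^\sharp B'$ denotes the map $f_j(x)=\min_{k:a'_{kj}\ne-\infty}(-a'_{kj}+\max_{l:b'_{kl}\ne-\infty}(b'_{kl}+x_l))$ on $\mathbb{R}^N$, with cycle-time vector $\chi(A'^\sharp B')=\lim_k f^k(0)/k$; $\Phi(\lambda)=\min_i\chi_i(A^\sharp B(\lambda))$. (Standing assumption: every column of $A$ and every row of $B(\lambda)$ has a finite entry.) The condition $\Phi(\lambda)\ge0$ expresses that Problem (P) has a feasible $x\in\mathbb{R}^n$ with objective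 value at most $\lambda$. *)

(* Defs.v *)
(* Max-plus scalars are encoded in the
   extended reals \bar R: -oo is the max-plus zero -infinity, +oo is +infinity. *)
From HB Require Import structures.
From mathcomp Require Import all_boot all_order all_algebra.
From mathcomp Require Import all_classical all_reals all_analysis.
Set Implicit Arguments. Unset Strict Implicit. Unset Printing Implicit Defensive.
Import Order.TTheory GRing.Theory Num.Theory numFieldNormedType.Exports.
Local Open Scope ring_scope.
Local Open Scope ereal_scope.

Section MaxPlus.
Variable R : realType.

(* Under the standing
   assumption the inner value is finite, and [fine] returns it as a real. *)
Definition sharp (M N : nat) (A' B' : 'M[\bar R]_(M, N)) (x : 'I_N -> R) :
    'I_N -> R := fun j =>
  fine (\big[Order.min/+oo]_(k | A' k j != -oo)
          (- A' k j + \big[Order.max/-oo]_(l | B' k l != -oo) (B' k l + (x l)%:E))).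

Definition chi (M N : nat) (A' B' : 'M[\bar R]_(M, N)) (i : 'I_N) : R :=
  limn (fun k : nat => (iter k (sharp A' B') (fun _ => 0%R) i / k%:R)%R).

Variables (m n : nat) (U V : 'M[\bar R]_(m, n)) (b d : 'cV[\bar R]_m)
  (p : 'cV[\bar R]_n) (q : 'rV[\bar R]_n).

Definition Amat : 'M[\bar R]_(m + n + 1, n + 1) :=
  col_mx (col_mx (row_mx U b) (row_mx (const_mx -oo) p))
         (row_mx (map_mx (fun x => - x) q) (const_mx -oo)).

Definition lamI (lam : R) : 'M[\bar R]_n :=
  \matrix_(i, j) if i == j then lam%:E else -oo.

Definition Bmat (lam : R) : 'M[\bar R]_(m + n + 1, n + 1) :=
  col_mx (col_mx (row_mx V d) (row_mx (lamI lam) (const_mx -oo)))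
         (row_mx (const_mx -oo) (const_mx lam%:E)).

(* Phi(lambda) = min_i chi_i(A^# B(lambda))  (an extended real; the index set is
   nonempty so the +oo default is never the value) *)
Definition Phi (lam : R) : \bar R :=
  \big[Order.min/+oo]_(i < n + 1) (chi Amat (Bmat lam) i)%:E.

Definition optimal (lam : R) : Prop :=
  0 <= Phi lam /\ forall l : R, (l < lam)%R -> Phi l < 0.

End MaxPlus.

(* ---- game graph defined by A', B' (M Max nodes = rows, N Min nodes = columns) *)
Section Game.
Variable R : realType.
Variables (M N : nat) (A' B' : 'M[\bar R]_(M, N)).

Definition is_strategy (tau : 'I_N -> 'I_M) : Prop :=
  forall j, A' (tau j) j != -oo.

Definition restr (tau : 'I_N -> 'I_M) : 'M[\bar R]_(M, N) :=
  \matrix_(i, j) if i == tau j then A' i j else -oo.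

(* Min node j leads (in two steps, via some Max node i) to Min node l *)
Definition minstep : rel 'I_N :=
  fun j l => [exists i, (A' i j != -oo) && (B' i l != -oo)].

(* a closed walk  cl 0 -> ci 0 -> cl 1 -> ci 1 -> ... -> ci K -> cl 0
   alternating between Min nodes cl k and Max nodes ci k *)
Definition is_cycle (K : nat) (cl : 'I_K.+1 -> 'I_N) (ci : 'I_K.+1 -> 'I_M) : Prop :=
  forall k, A' (ci k) (cl k) != -oo /\ B' (ci k) (cl (ordS k)) != -oo.

Definition cycle_weight (K : nat) (cl : 'I_K.+1 -> 'I_N) (ci : 'I_K.+1 -> 'I_M) : \bar R :=
  \sum_(k < K.+1) (- A' (ci k) (cl k) + B' (ci k) (cl (ordS k))).

Definition cycle_accessible (j : 'I_N) (K : nat) (cl : 'I_K.+1 -> 'I_N) : Prop :=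
  exists k, connect minstep j (cl k).

(* the condition of Proposition 7 at Min node j, for the group [m] of the first
   m Max nodes *)
Definition good_node (m : nat) (j : 'I_N) : Prop :=
  forall K (cl : 'I_K.+1 -> 'I_N) (ci : 'I_K.+1 -> 'I_M),
    is_cycle cl ci -> cycle_accessible j cl ->
    cycle_weight cl ci <= 0 /\
    (cycle_weight cl ci = 0 -> exists k, (m <= val (ci k))%N).

End Game.

(* Main.v *)
Require Import Defs.
From HB Require Import structures.
From mathcomp Require Import all_boot all_order all_algebra.
From mathcomp Require Import all_classical all_reals all_analysis.
From mathcomp Require Import lra.
Set Implicit Arguments. Unset Strict Implicit. Unset Printing Implicit Defensive.

Module P1.
Import Order.TTheory GRing.Theory Num.Theory.

Section Walks.
Variable N : nat.

Definition walk (e : rel 'I_N) (w : nat -> 'I_N) (k : nat) :=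
  forall i, (i < k)%N -> e (w i) (w i.+1).

Lemma walk_connect e w k : walk e w k -> connect e (w 0%N) (w k).
Proof.
elim: k => [|k IH] hw; first exact: connect0.
apply: connect_trans (IH _) (connect1 _) => [i ik|]; apply: hw => //.
exact: ltnW.
Qed.

Lemma connect_walk (e : rel 'I_N) x y : connect e x y ->
  exists w k, [/\ w 0%N = x, w k = y & walk e w k].
Proof.
move/connectP=> [p hp ->] {y}.
elim: p x hp => [|z p IH] x /=.
  by move=> _; exists (fun _ => x), 0%N; split.
move=> /andP [exz hp]; have [w [k [w0 wk hw]]] := IH z hp.
exists (fun i => if i is i'.+1 then w i' else x), k.+1; split => //.
by case=> [|i] /= ik; [rewrite w0 | apply: hw].
Qed.

End Walks.

Section BigMax.
Variable R : realType.
Local Open Scope ring_scope.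

Lemma bigmax_ge (I : finType) (P : pred I) (F : I -> R) d i :
  P i -> F i <= \big[Num.max/d]_(j | P j) F j.
Proof. by move=> Pi; rewrite (bigD1 i) //= le_max lexx. Qed.

Lemma bigmax_eq (I : finType) (P : pred I) (F : I -> R) d :
  (exists i, P i) -> (forall i, P i -> d <= F i) ->
  exists2 i, P i & \big[Num.max/d]_(j | P j) F j = F i.
Proof.
move=> [i0 Pi0] hd.
have : (\big[Num.max/d]_(j | P j) F j = d) \/ exists2 i, P i & \big[Num.max/d]_(j | P j) F j = F i.
  apply: (big_ind (fun z => z = d \/ exists2 i, P i & z = F i)); first by left.
    move=> x y hx hy; rewrite /Num.max /Order.max /=; by case: ifP.
  by move=> i Pi; right; exists i.
case=> // hb; exists i0 => //; apply/eqP; rewrite eq_le bigmax_ge // andbT.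
by rewrite hb hd.
Qed.

Lemma bigmin_le (I : finType) (P : pred I) (F : I -> R) d i :
  P i -> \big[Num.min/d]_(j | P j) F j <= F i.
Proof. by move=> Pi; rewrite (bigD1 i) //= ge_min lexx. Qed.

End BigMax.

End P1.

Module P2.
Import Order.TTheory GRing.Theory Num.Theory.
Import P1.

Section Wgt.
Variable R : realType.
Local Open Scope ring_scope.
Definition wgt N (c : 'I_N -> 'I_N -> R) (w : nat -> 'I_N) (k : nat) : R :=
  \sum_(0 <= i < k) c (w i) (w i.+1).

Lemma le_sum_nonneg (I : finType) (F : I -> R) i :
  (forall j, 0 <= F j) -> F i <= \sum_j F j.
Proof. by move=> h; rewrite (bigD1 i) //= lerDl sumr_ge0. Qed.
End Wgt.

Section Game.
Variables (R : realType) (M N : nat).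
Variables (EB : 'I_M -> 'I_N -> bool) (a b : 'I_M -> 'I_N -> R).
Local Open Scope ring_scope.

Definition estep (tau : 'I_N -> 'I_M) : rel 'I_N := fun x y => EB (tau x) y.
Definition cw (tau : 'I_N -> 'I_M) (x y : 'I_N) : R := - a (tau x) x + b (tau x) y.

Definition MinWin (EA : 'I_M -> 'I_N -> bool) tau j :=
  (forall x, EA (tau x) x) /\
  forall w L, (0 < L)%N -> w L = w 0%N -> walk (estep tau) w L ->
    connect (estep tau) j (w 0%N) -> wgt (cw tau) w L < 0.

Definition MaxPot (EA : 'I_M -> 'I_N -> bool) j :=
  exists (S : pred 'I_N) (pi : 'I_N -> R), S j /\
  forall x, S x -> forall k, EA k x ->
    exists l, [/\ EB k l, S l & pi x <= - a k x + b k l + pi l].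

Lemma lasso (EA : 'I_M -> 'I_N -> bool) tau j : (forall x k, EA k x -> k = tau x) ->
  forall w L, (0 < L)%N -> w L = w 0%N -> walk (estep tau) w L ->
    connect (estep tau) j (w 0%N) -> 0 <= wgt (cw tau) w L -> MaxPot EA j.
Proof.
move=> huniq w L L0 wL hw hc hpos.
have [p [P [p0 pP hp]]] := connect_walk hc.
pose W i := if (i <= P)%N then p i else w (i - P)%N.
have WP i : (P <= i)%N -> W i = w (i - P)%N.
  move=> Pi; rewrite /W; case: ifP => // iP.
  have -> : i = P by apply/eqP; rewrite eqn_leq iP Pi.
  by rewrite subnn pP.
pose T := (P + L)%N.
have hW : walk (estep tau) W T.
  move=> i iT; case: (ltnP i P) => iP.
    by rewrite /W (ltnW iP) iP; exact: hp.
  rewrite !WP ?(leqW iP) // subSn //; apply: hw.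
  by rewrite ltn_subLR.
pose rho s := \sum_(s <= r < T) cw tau (W r) (W r.+1).
pose low := - (\sum_(s < T.+1) `|rho s|) - 1.
have lowle s : (s < T.+1)%N -> low <= rho s.
  move=> sT; rewrite /low lerBlDr.
  have h : - (\sum_(s < T.+1) `|rho s|) <= rho s.
    rewrite lerNl; apply: le_trans (ler_norm _) _; rewrite normrN.
    have := @le_sum_nonneg R _ (fun s : 'I_T.+1 => `|rho s|) (Ordinal sT) (fun _ => normr_ge0 _).
    by [].
  by apply: le_trans h _; rewrite lerDl.
pose pi x := \big[Num.max/low]_(s : 'I_T.+1 | W s == x) rho s.
have pige (s : 'I_T.+1) : rho s <= pi (W s).
  by rewrite /pi; apply: bigmax_ge.
have rhoS s : (s < T)%N -> rho s = cw tau (W s) (W s.+1) + rho s.+1.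
  by move=> sT; rewrite /rho big_ltn.
have rhoT : rho T = 0 by rewrite /rho big_geq.
have rhoP : rho P = wgt (cw tau) w L.
  rewrite /rho /wgt -{1}(add0n P) big_addn /T addKn.
  apply: eq_bigr => i _; rewrite !WP ?leq_addl //; last by rewrite -addSn leq_addl.
  by rewrite addnK -addSn addnK.
pose S := fun x : 'I_N => [exists s : 'I_T.+1, W s == x].
exists S, pi; split.
  by apply/existsP; exists ord0; rewrite /W leq0n p0.
move=> x /existsP [s0 /eqP hs0] k hk; have -> := huniq _ _ hk.
have [s /eqP Ws pis] := @bigmax_eq R _ (fun s : 'I_T.+1 => W s == x) rho low
  (ex_intro _ s0 (introT eqP hs0)) (fun s _ => lowle s (ltn_ord s)).
rewrite -/(pi x) in pis.
have [sT|] := ltnP s T.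
  exists (W s.+1); split.
  - by rewrite -Ws; exact: hW.
  - by apply/existsP; exists (Ordinal (sT : (s.+1 < T.+1)%N)).
  rewrite pis rhoS // -Ws /cw lerD2l.
  exact: (pige (Ordinal (sT : (s.+1 < T.+1)%N))).
move=> Ts; have sT : nat_of_ord s = T.
  by apply/eqP; rewrite eqn_leq Ts -ltnS ltn_ord.
have PT : (P < T)%N by rewrite /T -{1}(addn0 P) ltn_add2l.
have xP : x = W P by rewrite -Ws sT WP ?leq_addr // /T addKn wL /W leqnn pP.
exists (W P.+1); split.
- by rewrite xP; exact: hW.
- by apply/existsP; exists (Ordinal (PT : (P.+1 < T.+1)%N)).
rewrite pis sT rhoT xP.
apply: le_trans (_ : rho P <= _); first by rewrite rhoP.
rewrite rhoS // /cw lerD2l.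
exact: (pige (Ordinal (PT : (P.+1 < T.+1)%N))).
Qed.


Lemma MaxPot_sub (EA EA' : 'I_M -> 'I_N -> bool) (S : pred 'I_N) (pi : 'I_N -> R) :
  (forall x, S x -> forall k, EA k x -> EA' k x) ->
  (forall x, S x -> forall k, EA' k x ->
    exists l, [/\ EB k l, S l & pi x <= - a k x + b k l + pi l]) ->
  forall x, S x -> forall k, EA k x ->
    exists l, [/\ EB k l, S l & pi x <= - a k x + b k l + pi l].
Proof. by move=> hsub h x Sx k hk; apply: h => //; apply: hsub. Qed.

Lemma D_main (n0 : nat) (EA : 'I_M -> 'I_N -> bool) :
  (#|[set p : 'I_M * 'I_N | EA p.1 p.2]| <= n0)%N ->
  (forall x, exists k, EA k x) ->
  forall j, (exists tau, MinWin EA tau j) \/ MaxPot EA j.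
Proof.
elim: n0 EA => [|n0 IH] EA hcard hcol j.
  exfalso; have [k hk] := hcol j.
  have : (k, j) \in [set p : 'I_M * 'I_N | EA p.1 p.2] by rewrite inE.
  by move: hcard; rewrite leqn0 cards_eq0 => /eqP ->; rewrite inE.
case: (pselect (exists x k1 k2, [/\ k1 != k2, EA k1 x & EA k2 x])).
  move=> [x [k1 [k2 [hne h1 h2]]]].
  pose EA1 k y := EA k y && ((y != x) || (k == k1)).
  pose EA2 k y := EA k y && ((y != x) || (k != k1)).
  have c1 : (#|[set p : 'I_M * 'I_N | EA1 p.1 p.2]| <= n0)%N.
    have : (#|[set p : 'I_M * 'I_N | EA1 p.1 p.2]| <=
            #|[set p : 'I_M * 'I_N | EA p.1 p.2] :\ (k2, x)|)%N.
      apply: subset_leq_card; apply/fintype.subsetP => -[k y]; rewrite !inE /EA1 /=.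
      case/andP => hk /orP [hyx|/eqP hkk]; rewrite hk andbT xpair_eqE negb_and.
        by rewrite hyx orbT.
      by rewrite hkk hne.
    move/leq_trans; apply; move: hcard.
    by rewrite (cardsD1 (k2, x)) inE h2.
  have c2 : (#|[set p : 'I_M * 'I_N | EA2 p.1 p.2]| <= n0)%N.
    have : (#|[set p : 'I_M * 'I_N | EA2 p.1 p.2]| <=
            #|[set p : 'I_M * 'I_N | EA p.1 p.2] :\ (k1, x)|)%N.
      apply: subset_leq_card; apply/fintype.subsetP => -[k y]; rewrite !inE /EA2 /=.
      case/andP => hk /orP [hyx|hkk]; rewrite hk andbT xpair_eqE negb_and.
        by rewrite hyx orbT.
      by rewrite hkk.
    move/leq_trans; apply; move: hcard.
    by rewrite (cardsD1 (k1, x)) inE h1.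
  have col1 : forall y, exists k, EA1 k y.
    move=> y; case: (eqVneq y x) => [->|hyx]; first by exists k1; rewrite /EA1 h1 !eqxx.
    by have [k hk] := hcol y; exists k; rewrite /EA1 hk hyx.
  have col2 : forall y, exists k, EA2 k y.
    move=> y; case: (eqVneq y x) => [->|hyx]; first by exists k2; rewrite /EA2 h2 eq_sym hne orbT.
    by have [k hk] := hcol y; exists k; rewrite /EA2 hk hyx.
  case: (IH EA1 c1 col1 j) => [[tau [hs hw]]|[S1 [pi1 [S1j H1]]]].
    by left; exists tau; split => // y; move: (hs y) => /andP [].
  case: (IH EA2 c2 col2 j) => [[tau [hs hw]]|[S2 [pi2 [S2j H2]]]].
    by left; exists tau; split => // y; move: (hs y) => /andP [].
  right.
  have [S1x|nS1x] := boolP (S1 x); last first.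
    exists S1, pi1; split => //; apply: MaxPot_sub H1 => y Sy k hk.
    by rewrite /EA1 hk; case: eqP Sy => // ->; rewrite (negbTE nS1x).
  have [S2x|nS2x] := boolP (S2 x); last first.
    exists S2, pi2; split => //; apply: MaxPot_sub H2 => y Sy k hk.
    by rewrite /EA2 hk; case: eqP Sy => // ->; rewrite (negbTE nS2x).
  pose cc := pi1 x - pi2 x.
  pose pi y := if S1 y then (if S2 y then Num.max (pi1 y) (pi2 y + cc) else pi1 y)
               else pi2 y + cc.
  have pi1le y : S1 y -> pi1 y <= pi y.
    by move=> h; rewrite /pi h; case: (S2 y); rewrite ?le_max ?lexx.
  have pi2le y : S2 y -> pi2 y + cc <= pi y.
    by move=> h; rewrite /pi h; case: (S1 y); rewrite ?le_max ?lexx ?orbT.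
  have pival y : S1 y || S2 y ->
      (S1 y /\ pi y = pi1 y) \/ (S2 y /\ pi y = pi2 y + cc).
    rewrite /pi; case: (boolP (S1 y)) => h1y; case: (boolP (S2 y)) => h2y //= _.
    - rewrite /Num.max /Order.max /=; case: ifP => _; by [right | left].
    - by left.
    - by right.
  have pix : pi x = pi1 x /\ pi x = pi2 x + cc.
    rewrite /pi S1x S2x /cc addrC subrK maxxx; by split.
  exists (fun y => S1 y || S2 y), pi; split; first by rewrite S1j.
  move=> y Sy k hk.
  have step1 : EA1 k y -> S1 y -> pi y = pi1 y ->
      exists l, [/\ EB k l, S1 l || S2 l & pi y <= - a k y + b k l + pi l].
    move=> hk1 hS1 ->; have [l [hl Sl hle]] := H1 y hS1 k hk1.
    exists l; split; rewrite ?Sl //; apply: le_trans hle _.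
    by rewrite lerD2l pi1le.
  have step2 : EA2 k y -> S2 y -> pi y = pi2 y + cc ->
      exists l, [/\ EB k l, S1 l || S2 l & pi y <= - a k y + b k l + pi l].
    move=> hk2 hS2 ->; have [l [hl Sl hle]] := H2 y hS2 k hk2.
    exists l; split; rewrite ?Sl ?orbT //.
    apply: le_trans (_ : - a k y + b k l + pi2 l + cc <= _); first by rewrite lerD2r.
    by rewrite -addrA lerD2l pi2le.
  case: (eqVneq y x) => [eyx|hyx].
    subst y; case: (eqVneq k k1) => hkk.
      by apply: step1 => //; [rewrite /EA1 hk hkk !eqxx ?orbT | case: pix].
    by apply: step2 => //; [rewrite /EA2 hk hkk orbT | case: pix].
  have e1 : EA1 k y by rewrite /EA1 hk hyx.
  have e2 : EA2 k y by rewrite /EA2 hk hyx.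
  by case: (pival y Sy) => -[hS hpi]; [exact: step1 | exact: step2].
move=> hno.
pose tau x := @xchoose _ (fun k => EA k x) (hcol x).
have htau x : EA (tau x) x by exact: (@xchooseP _ (fun k => EA k x) (hcol x)).
have huniq x k : EA k x -> k = tau x.
  move=> hk; apply/eqP; apply/negPn/negP => hne.
  by apply: hno; exists x, k, (tau x); split.
case: (pselect (exists w L, [/\ (0 < L)%N, w L = w 0%N, walk (estep tau) w L,
    connect (estep tau) j (w 0%N) & 0 <= wgt (cw tau) w L])).
  move=> [w [L [L0 wL hw hc hpos]]]; right; exact: (lasso huniq L0 wL hw hc hpos).
move=> hno2; left; exists tau; split => // w L L0 wL hw hc.
rewrite ltNge; apply/negP => hge; apply: hno2; exists w, L; split => //.
Qed.

End Game.

End P2.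

Module P3.
Import Order.TTheory GRing.Theory Num.Theory.
Import P1 P2.
Local Open Scope ring_scope.

Section WalkBound.
Variables (R : realType) (N : nat) (e : rel 'I_N) (c : 'I_N -> 'I_N -> R).

Lemma pigeon (w : nat -> 'I_N) : exists s r, [/\ (s < r)%N, (r <= N)%N & w s = w r].
Proof.
pose g (i : 'I_N.+1) := w i.
have : ~~ injectiveb g.
  apply/negP => /injectiveP /leq_card; rewrite !card_ord.
  by rewrite ltnn.
move=> /injectivePn [x [y hxy hg]].
case: (ltngtP x y) => h.
- by exists x, y; split => //; rewrite -ltnS.
- by exists y, x; split => //; rewrite -ltnS.
- by move: hxy; rewrite -val_eqE /= h eqxx.
Qed.

Lemma wgt_le_const (w : nat -> 'I_N) k B :
  (forall x y, c x y <= B) -> wgt c w k <= k%:R * B.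
Proof.
move=> hB; rewrite /wgt; apply: le_trans (_ : \sum_(0 <= i < k) B <= _).
  by apply: ler_sum => i _.
by rewrite sumr_const_nat subn0 mulr_natl.
Qed.

Lemma walk_bound (j : 'I_N) :
  (forall w L, (0 < L)%N -> w L = w 0%N -> walk e w L -> connect e j (w 0%N) ->
     wgt c w L < 0) ->
  exists C delta, 0 < delta /\
    forall w k, w 0%N = j -> walk e w k -> wgt c w k <= C - delta * k%:R.
Proof.
move=> hneg.
pose wF (F : {ffun 'I_N.+1 -> 'I_N}) (i : nat) := F (inord i).
pose P (p : ('I_N.+1 * {ffun 'I_N.+1 -> 'I_N})%type) :=
  [&& (0 < p.1)%N, wF p.2 p.1 == wF p.2 0%N,
      [forall i : 'I_N.+1, (i < p.1)%N ==> e (wF p.2 i) (wF p.2 i.+1)]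
    & connect e j (wF p.2 0%N)].
pose eps := \big[Num.min/1]_(p | P p) (- wgt c (wF p.2) p.1).
have eps0 : 0 < eps.
  apply: (big_ind (fun z => 0 < z)) => //.
    by move=> x y hx hy; rewrite lt_min hx hy.
  move=> [L F] /and4P [/= L0 /eqP hcl /forallP hw hc].
  rewrite oppr_gt0; apply: hneg => // i iL.
  have iN : (i < N.+1)%N by apply: ltn_trans iL _.
  by move: (hw (Ordinal iN)) => /implyP; apply.
have short w L : (0 < L)%N -> (L <= N)%N -> w L = w 0%N -> walk e w L ->
    connect e j (w 0%N) -> wgt c w L <= - eps.
  move=> L0 LN wL hw hc.
  pose F := [ffun i : 'I_N.+1 => w i].
  have wFE i : (i <= N)%N -> wF F i = w i.
    by move=> iN; rewrite /wF ffunE inordK.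
  have LN1 : (L < N.+1)%N by [].
  have hP : P (Ordinal LN1, F).
    apply/and4P; split => //=.
    - by rewrite !wFE // wL.
    - apply/forallP => i; apply/implyP => /= iL.
      rewrite !wFE //; first exact: hw.
      by apply: leq_trans LN.
      by apply: leq_trans (ltnW iL) LN.
    - by rewrite wFE.
  have eqw : wgt c (wF F) L = wgt c w L.
    apply: eq_big_nat => i /andP [_ iL]; rewrite !wFE //;
    by [apply: leq_trans LN | apply: leq_trans (ltnW iL) LN].
  have := @bigmin_le R _ P (fun p : ('I_N.+1 * {ffun 'I_N.+1 -> 'I_N})%type => - wgt c (wF p.2) p.1) 1 _ hP.
  by rewrite -/eps /= eqw lerNr.
have N0 : (0 < N)%N by apply: leq_ltn_trans (ltn_ord j).
pose Cw := \sum_x \sum_y `|c x y|.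
have hCw x y : c x y <= Cw.
  apply: le_trans (ler_norm _) _.
  apply: le_trans (_ : \sum_y `|c x y| <= _).
    exact: (@le_sum_nonneg R _ (fun y => `|c x y|) y (fun _ => normr_ge0 _)).
  exact: (@le_sum_nonneg R _ (fun x => \sum_y `|c x y|) x (fun _ => sumr_ge0 _ (fun _ _ => normr_ge0 _))).
have Cw0 : 0 <= Cw by apply: sumr_ge0 => x _; apply: sumr_ge0 => y _.
pose delta := eps / N%:R.
have delta0 : 0 < delta by rewrite divr_gt0 // ltr0n.
have epsE : eps = delta * N%:R by rewrite /delta mulfVK // pnatr_eq0 -lt0n.
exists (N%:R * (Cw + delta)), delta; split => //.
move=> w k; elim/ltn_ind: k w => k IH w w0 hw.
case: (leqP k N) => kN.
  apply: le_trans (wgt_le_const w k hCw) _.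
  rewrite mulrDr -addrA -[X in X <= _]addr0; apply: lerD.
    by apply: ler_wpM2r => //; rewrite ler_nat.
  by rewrite subr_ge0 mulrC; apply: ler_wpM2r; [exact: ltW | rewrite ler_nat].
have [s [r [sr rN wsr]]] := pigeon w.
pose d := (r - s)%N.
have d0 : (0 < d)%N by rewrite subn_gt0.
have rE : r = (s + d)%N by rewrite subnKC // ltnW.
have dk : (d <= k)%N by apply: leq_trans (leq_subr _ _) (leq_trans rN (ltnW kN)).
pose w' i := if (i <= s)%N then w i else w (i + d)%N.
have w'S i : (s <= i)%N -> w' i = w (i + d)%N.
  move=> si; rewrite /w'; case: ifP => // hi.
  have -> : i = s by apply/eqP; rewrite eqn_leq hi si.
  by rewrite wsr rE addnC.
have rk : (r < k)%N by apply: leq_ltn_trans rN kN.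
have hw' : walk e w' (k - d).
  move=> i ik; case: (ltnP i s) => hi.
    rewrite /w' (ltnW hi) hi; apply: hw.
    by apply: ltn_trans hi (ltn_trans sr rk).
  rewrite !w'S ?(leqW hi) // addSn; apply: hw.
  by rewrite addnC -ltn_subRL.
have hlt : (k - d < k)%N by rewrite ltn_subrL d0 (leq_trans d0 dk).
have w'0 : w' 0%N = j by rewrite /w' leq0n.
have IHw := IH _ hlt w' w'0 hw'.
pose u i := w (i + s)%N.
have hu : wgt c u d <= - eps.
  apply: short => //.
  - by rewrite -(leq_add2r s) subnK ?(ltnW sr) //; apply: leq_trans rN (leq_addr _ _).
  - by rewrite /u add0n addnC -rE wsr.
  - move=> i id; rewrite /u addSn; apply: hw.
    by apply: ltn_trans rk; rewrite rE addnC ltn_add2l.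
  - rewrite /u add0n -w0.
    have : walk e w s by move=> i hi; apply: hw; apply: ltn_trans hi (ltn_trans sr rk).
    by move/walk_connect.
have split_w : wgt c w k = wgt c w' (k - d) + wgt c u d.
  rewrite /wgt (big_cat_nat (leq0n s) (ltnW (ltn_trans sr rk))) /=.
  rewrite (big_cat_nat (ltnW sr) (ltnW rk)) /=.
  rewrite (big_cat_nat (leq0n s) (_ : (s <= k - d)%N)) /=; last first.
    by rewrite leq_subRL // addnC -rE ltnW.
  rewrite -!addrA; congr (_ + _).
    by apply: eq_big_nat => i /andP [_ hi]; rewrite /w' (ltnW hi) hi.
  rewrite addrC; congr (_ + _).
    rewrite rE big_addn; apply: eq_big_nat => i /andP [si _].
    by rewrite !w'S ?(leqW si) // addSn.
  rewrite -{1}(add0n s) big_addn; apply: eq_big_nat => i _.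
  by rewrite /u addSn.
have dN : (d <= N)%N by apply: leq_trans (leq_subr _ _) rN.
have hdd : delta * d%:R <= delta * N%:R by rewrite ler_pM2l // ler_nat.
rewrite split_w; apply: le_trans (lerD IHw hu) _.
rewrite natrB // epsE; move: hdd; set D := d%:R; set K := k%:R; set NN := N%:R.
rewrite mulrBr; lra.
Qed.
End WalkBound.

End P3.

Module P4.
Import Order.TTheory GRing.Theory Num.Theory numFieldNormedType.Exports.
Import P1 P2 P3.
Local Open Scope classical_set_scope.
Local Open Scope ring_scope.

Section Conv.
Variable R : realType.

Lemma arch_le0 (x C : R) : (forall k : nat, k%:R * x <= C) -> x <= 0.
Proof.
move=> h; rewrite leNgt; apply/negP => x0.
have := h (Num.trunc (C / x)).+1; rewrite leNgt => /negP; apply.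
have := truncnS_gt (C / x); set K := _%:R => hK.
by rewrite -ltr_pdivrMr.
Qed.

Lemma cvg_dich (u : nat -> R) W :
  (forall k, `|u k| <= k%:R * W) ->
  (forall t, (exists C, forall k, k%:R * t - C <= u k) \/
     (exists C delta, 0 < delta /\ forall k, u k <= C + k%:R * (t - delta))) ->
  exists v : R, [/\ limn (fun k => u k / k%:R) = v,
    (forall t C, (forall k, k%:R * t - C <= u k) -> t <= v) &
    (forall t C delta, 0 < delta -> (forall k, u k <= C + k%:R * (t - delta)) -> v < t)].
Proof.
move=> hW hd.
pose Ls : set R := fun t => exists C, forall k : nat, k%:R * t - C <= u k.
have Lne : Ls !=set0.
  exists (- W); exists 0; move=> k; rewrite subr0 mulrN.
  by move: (hW k); rewrite ler_norml => /andP [].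
have Lub : ubound Ls W.
  move=> t [C hC]; rewrite -subr_ge0 -oppr_le0 opprB.
  apply: (arch_le0 (C := C)) => k.
  move: (hC k) (hW k); rewrite ler_norml => h1 /andP [_ h2].
  rewrite mulrBr; lra.
have hs : has_sup Ls by split => //; exists W.
have sub t C delta : 0 < delta -> (forall k, u k <= C + k%:R * (t - delta)) ->
    sup Ls <= t - delta.
  move=> d0 hC; apply: ge_sup => // s [C' hC'].
  rewrite -subr_le0; apply: (arch_le0 (C := C + C')) => k.
  move: (hC k) (hC' k); rewrite !mulrBr; lra.
exists (sup Ls); split.
- apply: cvg_lim => //; apply/cvgrPdist_le => eps eps0.
  have eps2 : 0 < eps / 2 by rewrite divr_gt0.
  have [t1 [C1 hC1] ht1] := sup_adherent eps2 hs.
  have [[C hC]|[C2 [d2 [d20 hC2]]]] := hd (sup Ls + eps / 2).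
    have : sup Ls + eps / 2 <= sup Ls by apply: sup_upper_bound => //; exists C.
    by rewrite gerDl leNgt eps2.
  pose B := (`|C1| + `|C2|) / (eps / 2) + 1.
  near=> k.
  have hk : B <= k%:R by near: k; exact: nbhs_infty_ger.
  have B1 : 1 <= B by rewrite lerDr divr_ge0 // ?addr_ge0 // ltW.
  have k0 : 0 < k%:R :> R by apply: lt_le_trans hk; apply: lt_le_trans B1.
  have hB : `|C1| + `|C2| <= k%:R * (eps / 2).
    rewrite -ler_pdivrMr //; apply: le_trans hk; rewrite lerDl //.
  have E : sup Ls - u k / k%:R = (k%:R * sup Ls - u k) / k%:R.
    by rewrite mulrBl [k%:R * _]mulrC mulfK // gt_eqF.
  rewrite E normrM normfV normr_nat ler_pdivrMr //.
  have e1 : k%:R * (sup Ls - eps / 2) < k%:R * t1 by rewrite ltr_pM2l.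
  have hd2 : 0 <= k%:R * d2 by rewrite mulr_ge0 ?ltW.
  move: (hC1 k) (hC2 k) e1 hB hd2.
  have := ler_norm C1; have := ler_norm C2.
  have := ler_norm (- C1); have := ler_norm (- C2); rewrite !normrN.
  rewrite !mulrBr !mulrDr.
  set K := k%:R; set S := sup Ls => *.
  rewrite ler_norml; apply/andP; split; lra.
- by move=> t C hC; apply: sup_upper_bound => //; exists C.
- move=> t C delta d0 hC; apply: le_lt_trans (sub _ _ _ d0 hC) _.
  by rewrite ltrBlDr ltrDl.
Unshelve. all: by end_near.
Qed.
End Conv.

End P4.

Module P5.
Import Order.TTheory GRing.Theory Num.Theory numFieldNormedType.Exports.
Import P1 P2 P3 P4.
Local Open Scope classical_set_scope.
Local Open Scope ring_scope.

Section Op.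
Variables (R : realType) (M N : nat).
Variables (EA EB : 'I_M -> 'I_N -> bool) (a b : 'I_M -> 'I_N -> R).
Variable f : ('I_N -> R) -> ('I_N -> R).
Hypothesis Flo : forall y x r,
  (forall k, EA k x -> exists l, EB k l /\ r <= - a k x + b k l + y l) -> r <= f y x.
Hypothesis Fup : forall y x k, EA k x ->
  exists l, EB k l /\ f y x <= - a k x + b k l + y l.
Hypothesis colA : forall x, exists k, EA k x.
Hypothesis rowB : forall k, exists l, EB k l.

Definition it k := iter k f (fun _ => 0).

Lemma iter_lb t j : MaxPot EB a (fun k l => b k l - t) EA j ->
  exists C, forall k, k%:R * t - C <= it k j.
Proof.
move=> [S [pi [Sj H]]].
pose Mp := \sum_x `|pi x|.
have piM x : pi x <= Mp.
  apply: le_trans (ler_norm _) _.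
  exact: (@le_sum_nonneg R _ (fun x => `|pi x|) x (fun _ => normr_ge0 _)).
have claim k x : S x -> pi x - Mp + k%:R * t <= it k x.
  elim: k x => [|k IH] x Sx.
    by rewrite /it /= mul0r addr0 subr_le0.
  rewrite /it iterS; apply: Flo => k' hk.
  have [l [hl Sl hle]] := H x Sx k' hk.
  exists l; split => //.
  have := IH l Sl; rewrite /it -/(it k).
  move: hle; rewrite -addn1 natrD mulrDl mul1r.
  set A := it k l => *; lra.
exists (Mp - pi j) => k; have := claim k j Sj; lra.
Qed.

Lemma realize tau : (forall x, EA (tau x) x) ->
  forall k x, exists w, [/\ w 0%N = x, walk (estep EB tau) w k &
    it k x <= wgt (cw a b tau) w k].
Proof.
move=> hs; elim=> [|k IH] x.
  by exists (fun _ => x); split => //; rewrite /wgt big_geq.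
have [l [hl hle]] := Fup (it k) (hs x).
have [w [w0 hw hit]] := IH l.
exists (fun i => if i is i'.+1 then w i' else x); split => //.
  by case=> [|i] /= ik; [rewrite w0 | apply: hw].
rewrite /it iterS -/(it k); apply: le_trans hle _.
rewrite /wgt big_nat_recl //= w0 /cw lerD2l; exact: hit.
Qed.

Lemma iter_ub t j tau : MinWin EB a (fun k l => b k l - t) EA tau j ->
  exists C delta, 0 < delta /\ forall k, it k j <= C + k%:R * (t - delta).
Proof.
move=> [hs hw].
have [C [delta [d0 hC]]] := walk_bound hw.
exists C, delta; split => // k.
have [w [w0 hwk hit]] := realize hs k j.
apply: le_trans hit _.
have := hC w k w0 hwk.
have -> : wgt (cw a (fun k l => b k l - t) tau) w k = wgt (cw a b tau) w k - k%:R * t.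
  have -> : k%:R * t = \sum_(0 <= i < k) t by rewrite sumr_const_nat subn0 mulr_natl.
  rewrite /wgt /cw -sumrB.
  by apply: eq_bigr => i _; rewrite addrA.
rewrite mulrBr; lra.
Qed.

Lemma iter_abs : exists W, forall k x, `|it k x| <= k%:R * W.
Proof.
pose W := \sum_k \sum_x \sum_l `|- a k x + b k l|.
have hW k x l : `|- a k x + b k l| <= W.
  apply: le_trans (_ : \sum_l `|- a k x + b k l| <= _).
    exact: (@le_sum_nonneg R _ (fun l => `|- a k x + b k l|) l (fun _ => normr_ge0 _)).
  apply: le_trans (_ : \sum_x \sum_l `|- a k x + b k l| <= _).
    apply: (@le_sum_nonneg R _ (fun x => \sum_l `|- a k x + b k l|) x).
    by move=> ?; apply: sumr_ge0.
  apply: (@le_sum_nonneg R _ (fun k => \sum_x \sum_l `|- a k x + b k l|) k).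
  by move=> ?; apply: sumr_ge0 => ? _; apply: sumr_ge0.
exists W; elim=> [|k IH] x.
  by rewrite /it /= normr0 mul0r.
rewrite ler_norml; apply/andP; split.
  rewrite /it iterS -/(it k); apply: Flo => k' _.
  have [l hl] := rowB k'; exists l; split => //.
  have := hW k' x l; have := IH l; rewrite !ler_norml => /andP [h1 _] /andP [h2 _].
  rewrite -addn1 natrD mulrDl mul1r; lra.
have [k' hk'] := colA x.
have [l [hl hle]] := Fup (it k) hk'.
rewrite /it iterS -/(it k); apply: le_trans hle _.
have := hW k' x l; have := IH l; rewrite !ler_norml => /andP [_ h1] /andP [_ h2].
rewrite -addn1 natrD mulrDl mul1r; lra.
Qed.

Lemma chi_props j : exists v : R,
  [/\ limn (fun k => it k j / k%:R) = v,
      MaxPot EB a b EA j -> 0 <= v &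
      forall tau, MinWin EB a b EA tau j -> v < 0].
Proof.
have [W hW] := iter_abs.
have hd t : (exists C, forall k, k%:R * t - C <= it k j) \/
    (exists C delta, 0 < delta /\ forall k, it k j <= C + k%:R * (t - delta)).
  case: (@D_main R M N EB a (fun k l => b k l - t) _ EA (leqnn _) colA j).
    by move=> [tau hm]; right; exact: iter_ub hm.
  by move=> hp; left; exact: iter_lb hp.
have [v [hv h1 h2]] := cvg_dich (fun k => hW k j) hd.
have b0 : (fun k l => b k l - 0) = b.
  by apply: boolp.funext => k; apply: boolp.funext => l; rewrite subr0.
exists v; split => //.
  move=> hp; have hp' : MaxPot EB a (fun k l => b k l - 0) EA j by rewrite b0.
  have [C hC] := @iter_lb 0 j hp'.
  exact: h1 hC.
move=> tau hm; have hm' : MinWin EB a (fun k l => b k l - 0) EA tau j by rewrite b0.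
have [C [delta [d0 hC]]] := @iter_ub 0 j tau hm'.
exact: h2 d0 hC.
Qed.

End Op.

Section ChiNeg.
Variables (R : realType) (M N : nat).
Variables (EA EB : 'I_M -> 'I_N -> bool) (a b : 'I_M -> 'I_N -> R).
Variable f : ('I_N -> R) -> ('I_N -> R).
Hypothesis Flo : forall y x r,
  (forall k, EA k x -> exists l, EB k l /\ r <= - a k x + b k l + y l) -> r <= f y x.
Hypothesis Fup : forall y x k, EA k x ->
  exists l, EB k l /\ f y x <= - a k x + b k l + y l.
Hypothesis colA : forall x, exists k, EA k x.
Hypothesis rowB : forall k, exists l, EB k l.

Lemma chi_neg_iff j :
  limn (fun k => it f k j / k%:R) < 0 <-> exists tau, MinWin EB a b EA tau j.
Proof.
have [v [hv hmax hmin]] := chi_props Flo Fup colA rowB j.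
rewrite hv; split.
  move=> vn; case: (@D_main R M N EB a b _ EA (leqnn _) colA j) => // hp.
  by have := hmax hp; rewrite leNgt vn.
by move=> [tau hm]; exact: hmin hm.
Qed.
End ChiNeg.

End P5.

Module P6.
Import Order.TTheory GRing.Theory Num.Theory numFieldNormedType.Exports.
Import P1 P2 P3 P4 P5.
Local Open Scope classical_set_scope.
Local Open Scope ring_scope.

Section EBig.
Variable R : realType.
Local Open Scope ereal_scope.

Lemma ebigmax_ge (I : finType) (P : pred I) (F : I -> \bar R) i :
  P i -> F i <= \big[Order.max/-oo]_(j | P j) F j.
Proof. by move=> Pi; rewrite (bigD1 i) //= le_max lexx. Qed.

Lemma ebigmax_eq (I : finType) (P : pred I) (F : I -> \bar R) :
  (exists i, P i) -> exists2 i, P i & \big[Order.max/-oo]_(j | P j) F j = F i.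
Proof.
move=> [i0 Pi0].
have : (\big[Order.max/-oo]_(j | P j) F j = -oo) \/ exists2 i, P i & \big[Order.max/-oo]_(j | P j) F j = F i.
  apply: (big_ind (fun z => z = -oo \/ exists2 i, P i & z = F i)); first by left.
    move=> x y hx hy; rewrite /Order.max /=; by case: ifP.
  by move=> i Pi; right; exists i.
case=> // hb; exists i0 => //; apply/eqP; rewrite eq_le ebigmax_ge // andbT.
by rewrite hb leNye.
Qed.

Lemma ebigmin_le (I : finType) (P : pred I) (F : I -> \bar R) i :
  P i -> \big[Order.min/+oo]_(j | P j) F j <= F i.
Proof. by move=> Pi; rewrite (bigD1 i) //= ge_min lexx. Qed.

Lemma ebigmin_eq (I : finType) (P : pred I) (F : I -> \bar R) :
  (exists i, P i) -> exists2 i, P i & \big[Order.min/+oo]_(j | P j) F j = F i.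
Proof.
move=> [i0 Pi0].
have : (\big[Order.min/+oo]_(j | P j) F j = +oo) \/ exists2 i, P i & \big[Order.min/+oo]_(j | P j) F j = F i.
  apply: (big_ind (fun z => z = +oo \/ exists2 i, P i & z = F i)); first by left.
    move=> x y hx hy; rewrite /Order.min /=; by case: ifP.
  by move=> i Pi; right; exists i.
case=> // hb; exists i0 => //; apply/eqP; rewrite eq_le ebigmin_le //=.
by rewrite hb leey.
Qed.
End EBig.

Section Sharp.
Variables (R : realType) (M N : nat) (A' B' : 'M[\bar R]_(M, N)).
Hypothesis hA : forall k x, A' k x != +oo%E.
Hypothesis hB : forall k l, B' k l != +oo%E.
Hypothesis colA : forall x, exists k, A' k x != -oo%E.
Hypothesis rowB : forall k, exists l, B' k l != -oo%E.

Definition ea k x := A' k x != -oo%E.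
Definition eb k l := B' k l != -oo%E.
Definition ra k x := fine (A' k x).
Definition rb k l := fine (B' k l).

Lemma A'E k x : ea k x -> A' k x = (ra k x)%:E.
Proof. by move=> h; rewrite /ra fineK // fin_numE (hA k x) andbT. Qed.
Lemma B'E k l : eb k l -> B' k l = (rb k l)%:E.
Proof. by move=> h; rewrite /rb fineK // fin_numE (hB k l) andbT. Qed.

Lemma sharp_form (y : 'I_N -> R) x : exists k l,
  [/\ ea k x, eb k l, sharp A' B' y x = - ra k x + rb k l + y l,
      forall l', eb k l' -> rb k l' + y l' <= rb k l + y l &
      forall k', ea k' x -> exists l', eb k' l' /\ - ra k x + rb k l + y l <= - ra k' x + rb k' l' + y l'].
Proof.
have Iform k : exists2 l, eb k l &
    \big[Order.max/-oo%E]_(l | B' k l != -oo%E) (B' k l + (y l)%:E)%E = (rb k l + y l)%:E.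
  have [l hl ->] := ebigmax_eq (fun l => B' k l + (y l)%:E)%E (rowB k).
  by exists l => //; rewrite B'E.
have Imax k l' : eb k l' -> ((rb k l' + y l')%:E <=
    \big[Order.max/-oo%E]_(l | B' k l != -oo%E) (B' k l + (y l)%:E))%E.
  by move=> h; rewrite EFinD -B'E //; apply: (ebigmax_ge (fun l => B' k l + (y l)%:E)%E).
pose lk k := s2val (boolp.cid2 (Iform k)).
have lkP k : eb k (lk k) /\ \big[Order.max/-oo%E]_(l | B' k l != -oo%E) (B' k l + (y l)%:E)%E
    = (rb k (lk k) + y (lk k))%:E.
  by split; [exact: (s2valP (boolp.cid2 (Iform k))) | exact: (s2valP' (boolp.cid2 (Iform k)))].
have [k hk hO] := ebigmin_eq (fun k => - A' k x + \big[Order.max/-oo%E]_(l | B' k l != -oo%E)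
   (B' k l + (y l)%:E))%E (colA x).
have term k' : ea k' x -> (- A' k' x + \big[Order.max/-oo%E]_(l | B' k' l != -oo%E)
   (B' k' l + (y l)%:E))%E = (- ra k' x + rb k' (lk k') + y (lk k'))%:E.
  move=> h; have [_ ->] := lkP k'; by rewrite A'E // -EFinN -EFinD addrA.
exists k, (lk k); split => //.
- by case: (lkP k).
- by rewrite /sharp hO term.
- move=> l' hl'; have := Imax k l' hl'; have [_ ->] := lkP k; by rewrite lee_fin.
- move=> k' hk'; exists (lk k'); split; first by case: (lkP k').
  rewrite -lee_fin -term // -term // -hO.
  exact: (ebigmin_le (fun k => - A' k x + \big[Order.max/-oo%E]_(l | B' k l != -oo%E)
     (B' k l + (y l)%:E))%E).
Qed.

Lemma sharp_lo y x r :
  (forall k, ea k x -> exists l, eb k l /\ r <= - ra k x + rb k l + y l) -> r <= sharp A' B' y x.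
Proof.
move=> h; have [k [l [hk hl -> hmax _]]] := sharp_form y x.
have [l' [hl' hr]] := h k hk; apply: le_trans hr _.
by rewrite -!addrA lerD2l hmax.
Qed.

Lemma sharp_up y x k : ea k x ->
  exists l, eb k l /\ sharp A' B' y x <= - ra k x + rb k l + y l.
Proof.
move=> hk; have [k0 [l0 [_ _ -> _ hmin]]] := sharp_form y x.
exact: hmin.
Qed.

End Sharp.

End P6.

Module P7.
Import Order.TTheory GRing.Theory Num.Theory numFieldNormedType.Exports.
Import P1 P2 P3 P4 P5 P6.
Local Open Scope classical_set_scope.
Local Open Scope ring_scope.

Section Mats.
Variables (R : realType) (m n : nat).
Variables (U V : 'M[\bar R]_(m, n)) (b d : 'cV[\bar R]_m) (p : 'cV[\bar R]_n) (q : 'rV[\bar R]_n).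
Hypotheses (HU : forall i j, U i j != +oo%E) (HV : forall i j, V i j != +oo%E)
  (Hb : forall i j, b i j != +oo%E) (Hd : forall i j, d i j != +oo%E)
  (Hp : forall i j, p i j != +oo%E) (Hq : forall i j, q i j != -oo%E).

Lemma Amat_ninf i j : Amat U b p q i j != +oo%E.
Proof.
rewrite /Amat; case: (split_ordP i) => i' ->; [rewrite col_mxEu | rewrite col_mxEd].
  case: (split_ordP i') => i1 ->; [rewrite col_mxEu | rewrite col_mxEd];
  (case: (split_ordP j) => j1 ->; [rewrite row_mxEl | rewrite row_mxEr]) => //.
  by rewrite mxE.
case: (split_ordP j) => j1 ->; [rewrite row_mxEl | rewrite row_mxEr]; rewrite mxE //.
by rewrite eqe_oppLR /=.
Qed.

Lemma Bmat_ninf lam i l : Bmat V d lam i l != +oo%E.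
Proof.
rewrite /Bmat; case: (split_ordP i) => i' ->; [rewrite col_mxEu | rewrite col_mxEd].
  case: (split_ordP i') => i1 ->; [rewrite col_mxEu | rewrite col_mxEd];
  (case: (split_ordP l) => j1 ->; [rewrite row_mxEl | rewrite row_mxEr]) => //;
  rewrite !mxE //; by case: ifP.
by case: (split_ordP l) => j1 ->; [rewrite row_mxEl | rewrite row_mxEr]; rewrite mxE.
Qed.

Lemma Bmat_cases (i : 'I_(m + n + 1)) (l : 'I_(n + 1)) :
  [\/ (i < m)%N /\ (forall lam lam', Bmat V d lam i l = Bmat V d lam' i l),
      (m <= i)%N /\ (forall lam, Bmat V d lam i l = -oo%E) |
      (m <= i)%N /\ (forall lam, Bmat V d lam i l = lam%:E)].
Proof.
rewrite /Bmat; case: (split_ordP i) => i' ->.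
  case: (split_ordP i') => i1 ->.
    by constructor 1; split => [|lam lam']; rewrite ?col_mxEu //= ltn_ord.
  have hm : (m <= lshift 1 (rshift m i1))%N by rewrite /= leq_addr.
  case: (split_ordP l) => l1 ->.
    case: (eqVneq i1 l1) => h.
      by constructor 3; split => // lam; rewrite col_mxEu col_mxEd row_mxEl mxE h eqxx.
    by constructor 2; split => // lam; rewrite col_mxEu col_mxEd row_mxEl mxE (negbTE h).
  by constructor 2; split => // lam; rewrite col_mxEu col_mxEd row_mxEr mxE.
have hm : (m <= rshift (m + n) i')%N by rewrite /= -addnA leq_addr.
case: (split_ordP l) => l1 ->.
  by constructor 2; split => // lam; rewrite col_mxEd row_mxEl mxE.
by constructor 3; split => // lam; rewrite col_mxEd row_mxEr mxE.
Qed.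

End Mats.

End P7.

Module P8.
Import Order.TTheory GRing.Theory Num.Theory numFieldNormedType.Exports.
Import P1 P2 P3 P4 P5 P6 P7.
Local Open Scope classical_set_scope.
Local Open Scope ring_scope.

Section Main.
Variables (R : realType) (m n : nat).
Variables (U V : 'M[\bar R]_(m, n)) (b d : 'cV[\bar R]_m) (p : 'cV[\bar R]_n) (q : 'rV[\bar R]_n).
Hypotheses (HU : forall i j, U i j != +oo%E) (HV : forall i j, V i j != +oo%E)
  (Hb : forall i j, b i j != +oo%E) (Hd : forall i j, d i j != +oo%E)
  (Hp : forall i j, p i j != +oo%E) (Hq : forall i j, q i j != -oo%E).
Hypothesis HA : forall j, exists i, Amat U b p q i j != -oo%E.
Hypothesis HB : forall (lam : R) i, exists j, Bmat V d lam i j != -oo%E.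
Variable lamstar : R.

Local Notation A := (Amat U b p q).
Local Notation EA := (ea A).
Local Notation a := (ra A).
Local Notation EB := (eb (Bmat V d lamstar)).
Local Notation bl lam := (rb (Bmat V d lam)).

Lemma EBeq lam : eb (Bmat V d lam) = EB.
Proof.
apply: boolp.funext => i; apply: boolp.funext => l; rewrite /eb.
by case: (Bmat_cases V d i l) => -[_ h]; rewrite ?(h lam lamstar) ?h.
Qed.

Lemma blE lam i l : EB i l ->
  bl lam i l = bl lamstar i l + (if (m <= i)%N then lam - lamstar else 0).
Proof.
rewrite /eb /rb; case: (Bmat_cases V d i l) => -[hi h].
- by rewrite leqNgt hi addr0 (h lam lamstar).
- by rewrite h eqxx.
- by rewrite hi !h /= addrC subrK.
Qed.

Lemma chi_neg lam j : chi A (Bmat V d lam) j < 0 <->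
  exists tau, MinWin EB a (bl lam) EA tau j.
Proof.
have hA := Amat_ninf HU Hb Hp Hq.
have hB := Bmat_ninf HV Hd lam.
rewrite -(EBeq lam).
exact: (chi_neg_iff (sharp_lo hA hB HA (HB lam)) (sharp_up hA hB HA (HB lam)) HA (HB lam) j).
Qed.


Lemma Phi_neg lam : (Phi U V b d p q lam < 0)%E <-> exists j, chi A (Bmat V d lam) j < 0.
Proof.
split.
  move=> h; case: (pselect (exists j, chi A (Bmat V d lam) j < 0)) => // hno.
  exfalso; move: h; apply/negP; rewrite -leNgt /Phi.
  apply: (big_ind (fun z => 0 <= z)%E) => //.
    by move=> x y hx hy; rewrite le_min hx hy.
  move=> i _; rewrite lee_fin leNgt; apply/negP => hi; apply: hno; by exists i.
move=> [j hj]; rewrite /Phi.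
apply: le_lt_trans (ebigmin_le (fun i : 'I_(n + 1) => (chi A (Bmat V d lam) i)%:E) (P := xpredT) (i := j) _) _ => //.
Qed.

Lemma minstep_eq tau : (forall x, EA (tau x) x) ->
  minstep (restr A tau) (Bmat V d lamstar) =2 estep EB tau.
Proof.
move=> hs x y; rewrite /minstep /estep; apply/existsP/idP.
  move=> [i /andP [h1 h2]]; case: (eqVneq i (tau x)) => [ei|ne]; first by rewrite -ei.
  by move: h1; rewrite mxE (negbTE ne) eqxx.
move=> h; exists (tau x); rewrite mxE eqxx; apply/andP; split => //; exact: hs.
Qed.

Lemma wgt_shift lam tau w L : walk (estep EB tau) w L ->
  wgt (cw a (bl lam) tau) w L = wgt (cw a (bl lamstar) tau) w L +
    \sum_(0 <= i < L) (if (m <= tau (w i))%N then lam - lamstar else 0).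
Proof.
move=> hw; rewrite /wgt -big_split /=; apply: eq_big_nat => i /andP [_ iL].
by rewrite /cw blE ?addrA //; apply: hw.
Qed.


Definition goodW tau j := forall w L, (0 < L)%N -> w L = w 0%N ->
  walk (estep EB tau) w L -> connect (estep EB tau) j (w 0%N) ->
  wgt (cw a (bl lamstar) tau) w L <= 0 /\
  (wgt (cw a (bl lamstar) tau) w L = 0 -> exists2 i, (i < L)%N & (m <= tau (w i))%N).

Let hA := Amat_ninf HU Hb Hp Hq.
Let hB := Bmat_ninf HV Hd lamstar.

Lemma good_to_W tau j : (forall x, EA (tau x) x) ->
  good_node (restr A tau) (Bmat V d lamstar) m j -> goodW tau j.
Proof.
move=> hs hg w L L0 wL hw hc.
pose K := L.-1.
have LK : L = K.+1 by rewrite prednK.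
pose cl (k : 'I_K.+1) := w k.
pose ci (k : 'I_K.+1) := tau (w k).
have wS (k : 'I_K.+1) : w (ordS k) = w k.+1.
  rewrite /=; case: (ltnP k.+1 K.+1) => h; first by rewrite modn_small.
  have -> : k.+1 = K.+1 by apply/eqP; rewrite eqn_leq h ltn_ord.
  by rewrite modnn -LK wL.
have kL (k : 'I_K.+1) : (k < L)%N by rewrite LK ltn_ord.
have hcyc : is_cycle (restr A tau) (Bmat V d lamstar) cl ci.
  move=> k; split; first by rewrite /ci /cl mxE eqxx; exact: hs.
  rewrite /ci /cl wS; exact: hw (kL k).
have hacc : cycle_accessible (restr A tau) (Bmat V d lamstar) j cl.
  by exists ord0; rewrite (eq_connect (minstep_eq hs)).
have hweight : cycle_weight (restr A tau) (Bmat V d lamstar) cl ci =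
    (wgt (cw a (bl lamstar) tau) w L)%:E.
  rewrite /cycle_weight /wgt LK big_mkord -sumEFin; apply: eq_bigr => k _.
  rewrite /ci /cl wS mxE eqxx (A'E hA (hs _)) (B'E hB (hw k (kL k))) /cw.
  by rewrite EFinD EFinN.
have [h1 h2] := hg K cl ci hcyc hacc.
split; first by move: h1; rewrite hweight lee_fin.
move=> h0; have [k hk] : exists k, (m <= ci k)%N by apply: h2; rewrite hweight h0.
by exists k.
Qed.

Lemma W_to_good tau j : (forall x, EA (tau x) x) ->
  goodW tau j -> good_node (restr A tau) (Bmat V d lamstar) m j.
Proof.
move=> hs hg K cl ci hcyc [k0 hk0].
have ciE k : ci k = tau (cl k).
  case: (hcyc k) => + _; rewrite mxE; case: (eqVneq (ci k) (tau (cl k))) => // _.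
pose w i := cl (inord (i %% K.+1)).
have wk (k : 'I_K.+1) : w k = cl k by rewrite /w modn_small // inord_val.
have wstep (k : 'I_K.+1) : w k.+1 = cl (ordS k).
  by rewrite /w; congr cl; apply: val_inj; rewrite /= inordK // ltn_pmod.
have hw : walk (estep EB tau) w K.+1.
  move=> i iK; have := (hcyc (Ordinal iK)).2.
  by rewrite /estep -wstep ciE -(wk (Ordinal iK)).
have wL : w K.+1 = w 0%N by rewrite /w modnn mod0n.
have hc : connect (estep EB tau) j (w 0%N).
  apply: connect_trans (_ : connect _ j (cl k0)) _.
    by rewrite -(eq_connect (minstep_eq hs)).
  pose u i := w (k0 + i)%N.
  have hu : walk (estep EB tau) u (K.+1 - k0).
    move=> i ik; rewrite /u.
    have -> : (k0 + i.+1 = (k0 + i).+1)%N by rewrite addnS.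
    have h : (k0 + i < K.+1)%N by move: ik; rewrite ltn_subRL.
    exact: (hw _ h).
  have e1 : u 0%N = cl k0 by rewrite /u addn0 wk.
  have e2 : u (K.+1 - k0)%N = w 0%N by rewrite /u (subnKC (ltnW (ltn_ord k0))) wL.
  by have := walk_connect hu; rewrite e1 e2.
have hweight : cycle_weight (restr A tau) (Bmat V d lamstar) cl ci =
    (wgt (cw a (bl lamstar) tau) w K.+1)%:E.
  rewrite /cycle_weight /wgt big_mkord -sumEFin; apply: eq_bigr => k _.
  have hk := hw k (ltn_ord k).
  rewrite ciE -wstep -(wk k) mxE eqxx (A'E hA (hs _)) (B'E hB hk) /cw.
  by rewrite EFinD EFinN.
have [h1 h2] := hg w K.+1 (ltn0Sn _) wL hw hc.
split; first by rewrite hweight lee_fin.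
move=> h0; have [i iK hi] : exists2 i, (i < K.+1)%N & (m <= tau (w i))%N.
  by apply: h2; apply/eqP; rewrite -(@eqe R) -hweight h0.
by exists (Ordinal iK); rewrite ciE -(wk (Ordinal iK)).
Qed.

End Main.

End P8.

Module P9.
Import Order.TTheory GRing.Theory Num.Theory numFieldNormedType.Exports.
Import P1 P2 P3 P4 P5 P6 P7 P8.
Local Open Scope classical_set_scope.
Local Open Scope ring_scope.

Lemma unif_delta (R : realType) (T : finType) (P : T -> R -> Prop) :
  (forall t, exists2 δ, 0 < δ & P t δ) ->
  (forall t δ δ', 0 < δ' -> δ' <= δ -> P t δ -> P t δ') ->
  exists2 δ, 0 < δ & forall t, P t δ.
Proof.
move=> hex hmon.
suff : forall s : seq T, exists2 δ, 0 < δ & forall t, t \in s -> P t δ.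
  by move=> /(_ (enum T)) [δ hδ h]; exists δ => // t; apply: h; rewrite mem_enum.
elim=> [|t s [δ hδ IH]]; first by exists 1.
have [δt ht Pt] := hex t.
exists (Num.min δ δt); first by rewrite lt_min hδ ht.
move=> t'; rewrite in_cons => /orP [/eqP ->|hs].
  by apply: hmon Pt; rewrite ?lt_min ?hδ ?ht // ge_min lexx orbT.
by apply: hmon (IH _ hs); rewrite ?lt_min ?hδ ?ht // ge_min lexx.
Qed.

Section Main2.
Variables (R : realType) (m n : nat).
Variables (U V : 'M[\bar R]_(m, n)) (b d : 'cV[\bar R]_m) (p : 'cV[\bar R]_n) (q : 'rV[\bar R]_n).
Hypotheses (HU : forall i j, U i j != +oo%E) (HV : forall i j, V i j != +oo%E)
  (Hb : forall i j, b i j != +oo%E) (Hd : forall i j, d i j != +oo%E)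
  (Hp : forall i j, p i j != +oo%E) (Hq : forall i j, q i j != -oo%E).
Hypothesis HA : forall j, exists i, Amat U b p q i j != -oo%E.
Hypothesis HB : forall (lam : R) i, exists j, Bmat V d lam i j != -oo%E.
Variable lamstar : R.

Local Notation A := (Amat U b p q).
Local Notation EA := (ea A).
Local Notation a := (ra A).
Local Notation EB := (eb (Bmat V d lamstar)).
Local Notation bl lam := (rb (Bmat V d lam)).

Lemma back_dir : (0 <= Phi U V b d p q lamstar)%E ->
  (exists tau : 'I_(n + 1) -> 'I_(m + n + 1), is_strategy A tau /\
     exists j, good_node (restr A tau) (Bmat V d lamstar) m j) ->
  optimal U V b d p q lamstar.
Proof.
move=> h0 [tau [hs [j hg]]]; split => // lam hlam.
apply/Phi_neg; exists j.
apply/(chi_neg HU HV Hb Hd Hp Hq HA HB lamstar); exists tau; split => // w L L0 wL hw hc.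
have [h1 h2] := good_to_W HU HV Hb Hd Hp Hq hs hg L0 wL hw hc.
rewrite (wgt_shift U b p q lam hw).
set W := wgt _ w L; set S := \sum_(0 <= i < L) _.
have hneg : lam - lamstar < 0 by rewrite subr_lt0.
have Sle : S <= 0.
  by apply: sumr_le0 => i _; case: ifP => _ //; apply: ltW.
case: (ltrP W 0) => hW.
  by move: hW Sle; lra.
have W0 : W = 0 by apply/eqP; rewrite eq_le h1 hW.
have [i iL hi] := h2 W0.
rewrite W0 add0r /S (big_cat_nat (leq0n i) (ltnW iL)) /= [X in _ + X]big_ltn //= hi.
apply: (@le_lt_trans _ _ (0 + ((lam - lamstar) + 0))).
  apply: lerD; first by apply: sumr_le0 => k _; case: ifP => _ //; apply: ltW.
  by rewrite lerD2l; apply: sumr_le0 => k _; case: ifP => _ //; apply: ltW.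
by rewrite add0r addr0.
Qed.


Lemma fwd_dir : optimal U V b d p q lamstar ->
  (exists tau : 'I_(n + 1) -> 'I_(m + n + 1), is_strategy A tau /\
     exists j, good_node (restr A tau) (Bmat V d lamstar) m j).
Proof.
move=> [h0 hopt].
case: (pselect (exists tau : 'I_(n + 1) -> 'I_(m + n + 1), is_strategy A tau /\
     exists j, good_node (restr A tau) (Bmat V d lamstar) m j)) => // hno.
exfalso.
pose P (t : ({ffun 'I_(n + 1) -> 'I_(m + n + 1)} * 'I_(n + 1))%type) (δ : R) :=
  forall lam, lamstar - δ < lam -> lam < lamstar -> ~ MinWin EB a (bl lam) EA t.1 t.2.
have hP t : exists2 δ, 0 < δ & P t δ.
  case: (pselect (forall x, EA (t.1 x) x)) => hs; last first.
    by exists 1 => // lam _ _ [hs' _].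
  have ng : ~ goodW U V b d p q lamstar t.1 t.2.
    move=> hg; apply: hno; exists t.1; split => //; exists t.2.
    exact: (W_to_good HU HV Hb Hd Hp Hq hs hg).
  have [w [L [L0 wL hw hc hbad]]] : exists w L, [/\ (0 < L)%N, w L = w 0%N,
      walk (estep EB t.1) w L, connect (estep EB t.1) t.2 (w 0%N) &
      ~ (wgt (cw a (bl lamstar) t.1) w L <= 0 /\
         (wgt (cw a (bl lamstar) t.1) w L = 0 ->
           exists2 i, (i < L)%N & (m <= t.1 (w i))%N))].
    apply: contrapT => hn; apply: ng => w L L0 wL hw hc.
    apply: contrapT => hb; apply: hn; exists w, L; split => //.
  set W := wgt (cw a (bl lamstar) t.1) w L in hbad.
  have L0r : 0 < L%:R :> R by rewrite ltr0n.
  exists (if 0 < W then W / L%:R else 1).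
    by case: ifP => // hW; rewrite divr_gt0.
  move=> lam hl1 hl2 [_ hmw].
  have := hmw w L L0 wL hw hc; rewrite (wgt_shift U b p q lam hw) -/W.
  set S := \sum_(0 <= i < L) _.
  have hneg : lam - lamstar < 0 by rewrite subr_lt0.
  have SL : L%:R * (lam - lamstar) <= S.
    have -> : L%:R * (lam - lamstar) = \sum_(0 <= i < L) (lam - lamstar).
      by rewrite sumr_const_nat subn0 mulr_natl.
    by apply: ler_sum => i _; case: ifP => _ //; apply: ltW.
  case: (ltrP 0 W) => hW.
    move: hl1; rewrite hW ltrBlDr -ltrBlDl => hl1.
    move: hl1; rewrite ltr_pdivlMr // => hl1.
    move: SL; rewrite mulrBr [_ * L%:R]mulrC mulrBr in hl1 *; lra.
  have W0 : W = 0.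
    apply/eqP; rewrite eq_le hW /=; apply/negP => hW'.
    by apply: hbad; split => // h; move: hW'; rewrite h lexx.
  have hnone : forall i, (i < L)%N -> ~~ (m <= t.1 (w i))%N.
    move=> i iL; apply/negP => hi; apply: hbad; split; first by rewrite W0.
    by move=> _; exists i.
  have S0 : S = 0.
    rewrite /S big_nat_cond; apply: big1 => i /andP [/andP [_ iL] _].
    by rewrite (negbTE (hnone i iL)).
  by rewrite W0 S0 addr0 ltxx.
have [δ hδ hall] := unif_delta hP (fun t δ δ' h0' hle h lam h1 h2 =>
  h lam (le_lt_trans (lerB (lexx _) hle) h1) h2).
pose lam := lamstar - δ / 2.
have hlam : lam < lamstar by rewrite /lam ltrBlDr ltrDl divr_gt0.
have := hopt lam hlam; move/Phi_neg => [j hj].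
move: hj; move/(chi_neg HU HV Hb Hd Hp Hq HA HB lamstar) => [tau hm].
have := hall ([ffun x => tau x], j) lam _ hlam; apply.
  by rewrite /lam ltrD2l ltrN2 ltr_pdivrMr // ltr_pMr // ltr1n.
have -> : (fun_of_fin [ffun x => tau x]) = tau by apply: boolp.funext => x; rewrite ffunE.
exact: hm.
Qed.

End Main2.

End P9.

Import Order.TTheory GRing.Theory Num.Theory.
Import P1 P2 P3 P4 P5 P6 P7 P8 P9.
Local Open Scope ring_scope.
Local Open Scope ereal_scope.

Theorem proposition7 (R : realType) (m n : nat)
  (U V : 'M[\bar R]_(m, n)) (b d : 'cV[\bar R]_m) (p : 'cV[\bar R]_n) (q : 'rV[\bar R]_n)
  (HU : forall i j, U i j != +oo) (HV : forall i j, V i j != +oo)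
  (Hb : forall i j, b i j != +oo) (Hd : forall i j, d i j != +oo)
  (Hp : forall i j, p i j != +oo) (Hq : forall i j, q i j != -oo)
  (HA : forall j, exists i, Amat U b p q i j != -oo)
  (HB : forall (lam : R) i, exists j, Bmat V d lam i j != -oo)
  (lamstar : R) :
  optimal U V b d p q lamstar <->
  (0 <= Phi U V b d p q lamstar /\
   exists tau : 'I_(n + 1) -> 'I_(m + n + 1),
     is_strategy (Amat U b p q) tau /\
     exists j : 'I_(n + 1),
       good_node (restr (Amat U b p q) tau) (Bmat V d lamstar) m j).
Proof.
split.
  move=> hopt; split; first by case: hopt.
  exact: (fwd_dir HU HV Hb Hd Hp Hq HA HB hopt).
move=> [h0 hex]; exact: (back_dir HU HV Hb Hd Hp Hq HA HB h0 hex).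
Qed.
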